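(* Let $A \in \mathbb{C}^{N\times N}$ have an orthonormal basis of eigenvectors $\psi_1,\ldots,\psi_N$ with eigenvalues ordered so that $|\lambda_1|\ge\cdots\ge|\lambda_N|$ and $\lambda_m \neq 0$ for some $1\le m<N$. Let $\Psi_{\le m} = [\psi_1,\ldots,\psi_m]$ and $\Psi_{>m} = [\psi_{m+1},\ldots,\psi_N]$. Let $V \in \mathbb{C}^{N\times m}$ be such that $\Psi_{\le m}^{*}V$ is invertible, let $\Phi\in\mathbb{C}^{m\times m}$ be invertible, let $E \in \mathbb{C}^{N\times m}$, and set $V' = AV\Phi + E$. If $$\frac{\|E\|_2}{|\lambda_m|} < \left(\frac{1}{\kappa_2(\Psi_{\le m}^{*}V\Phi)} - \left|\frac{\lambda_{m+1}}{\lambda_m}\right|\right)\frac{\|\Psi_{\le m}^{*}V\Phi\|_2\,\|\Psi_{>m}^{*}V\Phi\|_2}{\|V\Phi\|_2},$$ then $\Theta(\mathcal{R}(V'),\mathcal{R}(\Psi_{\le m})) < \Theta(\mathcal{R}(V),\mathcal{R}(\Psi_{\le m}))$.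
   Context: $\|\cdot\|_2$ is the spectral norm, $\kappa_2(X) = \sigma_1(X)/\sigma_m(X)$ is the 2-norm condition number of $X\in\mathbb{C}^{m\times m}$, $\mathcal{R}(X)$ is the column space of $X$, and $^{*}$ denotes conjugate transpose. For $X\in\mathbb{C}^{N\times m}$ with $\Psi_{\le m}^{*}X$ invertible, $\Theta(\mathcal{R}(X),\mathcal{R}(\Psi_{\le m}))$ denotes the largest principal angle between $\mathcal{R}(X)$ and $\mathcal{R}(\Psi_{\le m})$, which satisfies $\tan\Theta(\mathcal{R}(X),\mathcal{R}(\Psi_{\le m})) = \sigma_1\big(\Psi_{>m}^{*}X(\Psi_{\le m}^{*}X)^{-1}\big)$, $\sigma_1$ denoting the largest singular value. In the application, $V'$ is the result of one step of inexact subspace iteration: $\Phi$ contains Ritz coefficients and $E$ is the accumulated perturbation (truncation) error. *)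

(* Defs.v *)
From HB Require Import structures.
From mathcomp Require Import all_boot all_order all_algebra.
From mathcomp Require Import all_classical all_reals all_analysis.
From mathcomp Require Import complex.
Set Implicit Arguments. Unset Strict Implicit. Unset Printing Implicit Defensive.
Import Order.TTheory GRing.Theory Num.Theory.
Local Open Scope ring_scope.
Local Open Scope classical_set_scope.

Section SpectralDefs.
Variable R : realType.
Local Notation C := R[i].

Definition cabs (z : C) : R := Num.sqrt (complex.Re z ^+ 2 + complex.Im z ^+ 2).

Definition ctrmx p q (X : 'M[C]_(p, q)) : 'M[C]_(q, p) := map_mx (@conjc R) X^T.

Definition vnorm2 n (x : 'cV[C]_n) : R :=
  Num.sqrt (\sum_i (complex.Re (x i 0) ^+ 2 + complex.Im (x i 0) ^+ 2)).

Definition spec_norm p q (X : 'M[C]_(p, q)) : R :=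
  sup [set vnorm2 (X *m x) | x in [set x : 'cV[C]_q | vnorm2 x = 1]].

Definition sigma_min m (X : 'M[C]_m) : R :=
  inf [set vnorm2 (X *m x) | x in [set x : 'cV[C]_m | vnorm2 x = 1]].

Definition kappa2 m (X : 'M[C]_m) : R := spec_norm X / sigma_min X.

(* largest principal angle Theta(R(X), R(Psi_le)), where Psi = [Psi_le Psi_gt]
   is an N x N matrix (N = m + k) whose columns are an orthonormal basis:
   tan Theta = sigma_1 (Psi_gt^* X (Psi_le^* X)^{-1}) when Psi_le^* X is
   invertible; otherwise the subspaces are not in generic position and the
   largest principal angle is pi/2. *)
Definition max_angle m k (Psi : 'M[C]_(m + k)) (X : 'M[C]_(m + k, m)) : R :=
  let Xle := ctrmx (lsubmx Psi) *m X in
  let Xgt := ctrmx (rsubmx Psi) *m X in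
  if Xle \in unitmx then atan (spec_norm (Xgt *m invmx Xle)) else pi / 2.

End SpectralDefs.

(* Main.v *)
Require Import Defs.
From HB Require Import structures.
From mathcomp Require Import all_boot all_order all_algebra.
From mathcomp Require Import all_classical all_reals all_analysis.
From mathcomp Require Import complex.
From mathcomp Require Import ring lra.
Import Order.TTheory GRing.Theory Num.Theory.
Set Implicit Arguments. Unset Strict Implicit. Unset Printing Implicit Defensive.
Local Open Scope ring_scope.

Section Aux.
Variable R : realType.
Local Notation C := R[i].

Definition n2 (z : C) : R := complex.Re z ^+ 2 + complex.Im z ^+ 2.
Lemma n2_ge0 z : 0 <= n2 z.
Proof. by rewrite /n2 addr_ge0 // sqr_ge0. Qed.
Lemma n2M a b : n2 (a * b) = n2 a * n2 b.
Proof. case: a => a1 a2; case: b => b1 b2; rewrite /n2 /=. ring. Qed.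
Lemma ReD (a b : C) : complex.Re (a + b) = complex.Re a + complex.Re b.
Proof. by case: a; case: b. Qed.
Lemma ImD (a b : C) : complex.Im (a + b) = complex.Im a + complex.Im b.
Proof. by case: a; case: b. Qed.
Lemma ReN (a : C) : complex.Re (- a) = - complex.Re a.
Proof. by case: a. Qed.
Lemma ImN (a : C) : complex.Im (- a) = - complex.Im a.
Proof. by case: a. Qed.
Lemma n2_conjM (a : C) : conjc a * a = ((n2 a)%:C)%C.
Proof. case: a => a1 a2; rewrite /n2 /=; apply/eqP; rewrite eq_complex /=; apply/andP; split; apply/eqP; ring. Qed.
Lemma n2C (r : R) : n2 (r%:C)%C = r ^+ 2.
Proof. by rewrite /n2 /= expr0n addr0. Qed.
Lemma cabsE z : cabs z = Num.sqrt (n2 z). Proof. by []. Qed.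

Lemma sqrt_le_of (u v : R) : 0 <= v -> u <= v ^+ 2 -> Num.sqrt u <= v.
Proof. by move=> v0 uv; rewrite -(ger0_norm v0) -sqrtr_sqr ler_wsqrtr. Qed.

Lemma n2_eq0 z : n2 z = 0 -> z = 0.
Proof.
case: z => a b; rewrite /n2 /= => /eqP; rewrite paddr_eq0 ?sqr_ge0 // !sqrf_eq0.
by case/andP => /eqP -> /eqP ->.
Qed.

Section Vec.
Variable n : nat.
Implicit Types x y : 'cV[C]_n.
Definition nsq x : R := \sum_i n2 (x i 0).
Definition rdot x y : R := \sum_i (complex.Re (x i 0) * complex.Re (y i 0) + complex.Im (x i 0) * complex.Im (y i 0)).

Lemma vnormE x : vnorm2 x = Num.sqrt (nsq x). Proof. by []. Qed.
Lemma nsq_ge0 x : 0 <= nsq x. Proof. by apply: sumr_ge0 => i _; apply: n2_ge0. Qed.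
Lemma vnorm_ge0 x : 0 <= vnorm2 x. Proof. exact: sqrtr_ge0. Qed.
Lemma vnorm_sq x : vnorm2 x ^+ 2 = nsq x. Proof. by rewrite sqr_sqrtr // nsq_ge0. Qed.

Lemma nsq_eq0 x : nsq x = 0 -> x = 0.
Proof.
move=> /eqP; rewrite psumr_eq0 => [|i _]; last exact: n2_ge0.
move=> /allP H; apply/matrixP => i j; rewrite ord1 mxE; apply: n2_eq0.
by apply/eqP; apply: (H i); rewrite mem_index_enum.
Qed.

Lemma vnorm_eq0 x : vnorm2 x = 0 -> x = 0.
Proof. by move=> /eqP; rewrite vnormE sqrtr_eq0 => h; apply: nsq_eq0; apply/eqP; rewrite eq_le h nsq_ge0. Qed.

Lemma nsqD x y : nsq (x + y) = nsq x + nsq y + 2 * rdot x y.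
Proof.
rewrite /nsq /rdot mulr_sumr -!big_split; apply: eq_bigr => i _.
rewrite mxE /n2 ReD ImD /=; ring.
Qed.

Lemma nsq_quad x y (p q : R) : 0 <= p ^+ 2 * nsq x + q ^+ 2 * nsq y - 2 * p * q * rdot x y.
Proof.
have -> : p ^+ 2 * nsq x + q ^+ 2 * nsq y - 2 * p * q * rdot x y =
  \sum_i ((p * complex.Re (x i 0) - q * complex.Re (y i 0)) ^+ 2 +
          (p * complex.Im (x i 0) - q * complex.Im (y i 0)) ^+ 2).
  rewrite /nsq /rdot !mulr_sumr -sumrN -!big_split; apply: eq_bigr => i _.
  rewrite /n2 /=; ring.
by apply: sumr_ge0 => i _; rewrite addr_ge0 // sqr_ge0.
Qed.

Lemma rdot0 y : rdot 0 y = 0.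
Proof. by rewrite /rdot big1 // => i _; rewrite mxE /= !mul0r addr0. Qed.
Lemma rdotC x y : rdot x y = rdot y x.
Proof. by apply: eq_bigr => i _; rewrite mulrC [complex.Im _ * _]mulrC. Qed.

Lemma cauchy_schwarz x y : rdot x y <= vnorm2 x * vnorm2 y.
Proof.
have [->|x0] := eqVneq x 0; first by rewrite rdot0 mulr_ge0 // vnorm_ge0.
have [->|y0] := eqVneq y 0; first by rewrite rdotC rdot0 mulr_ge0 // vnorm_ge0.
set a := vnorm2 x; set b := vnorm2 y.
have a0 : 0 < a by rewrite lt_neqAle vnorm_ge0 andbT eq_sym; apply/eqP => /vnorm_eq0; apply/eqP.
have b0 : 0 < b by rewrite lt_neqAle vnorm_ge0 andbT eq_sym; apply/eqP => /vnorm_eq0; apply/eqP.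
have := nsq_quad x y b a; rewrite -!vnorm_sq -/a -/b => h.
have ab0 : 0 < a * b by rewrite mulr_gt0.
rewrite -(ler_pM2l ab0); nra.
Qed.

Lemma vnormD x y : vnorm2 (x + y) <= vnorm2 x + vnorm2 y.
Proof.
rewrite {1}vnormE; apply: sqrt_le_of; first by rewrite addr_ge0 // vnorm_ge0.
rewrite nsqD -!vnorm_sq; have := cauchy_schwarz x y; nra.
Qed.

Lemma nsqZ (c : C) x : nsq (c *: x) = n2 c * nsq x.
Proof. by rewrite /nsq mulr_sumr; apply: eq_bigr => i _; rewrite mxE n2M. Qed.

Lemma vnormZ (c : C) x : vnorm2 (c *: x) = cabs c * vnorm2 x.
Proof. by rewrite vnormE nsqZ sqrtrM // n2_ge0. Qed.

Lemma vnormN x : vnorm2 (- x) = vnorm2 x.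
Proof. by rewrite -scaleN1r vnormZ /cabs /= oppr0 expr0n addr0 sqrtr_sqr normrN normr1 mul1r. Qed.

Lemma entry_le x j : cabs (x j 0) <= vnorm2 x.
Proof.
rewrite /cabs vnormE ler_sqrt ?nsq_ge0 // /nsq (bigD1 j) //= lerDl.
by apply: sumr_ge0 => i _; apply: n2_ge0.
Qed.

Lemma ctrmx_nsq x : (ctrmx x *m x) 0 0 = ((nsq x)%:C)%C.
Proof.
rewrite mxE /nsq raddf_sum; apply: eq_bigr => i _.
by rewrite /ctrmx !mxE n2_conjM.
Qed.

End Vec.

Lemma ctrmx_mul p q r (A : 'M[C]_(p, q)) (B : 'M[C]_(q, r)) :
  ctrmx (A *m B) = ctrmx B *m ctrmx A.
Proof. by rewrite /ctrmx trmx_mul map_mxM. Qed.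

Lemma ctrmxK p q (A : 'M[C]_(p, q)) : ctrmx (ctrmx A) = A.
Proof. by apply/matrixP => i j; rewrite !mxE conjcK. Qed.

Lemma nsq_unitary p q (Q : 'M[C]_(p, q)) (z : 'cV[C]_q) :
  ctrmx Q *m Q = 1%:M -> nsq (Q *m z) = nsq z.
Proof.
move=> HQ; apply: (@complexI R).
by rewrite -!ctrmx_nsq ctrmx_mul mulmxA -(mulmxA (ctrmx z)) HQ mulmx1.
Qed.

Lemma nsq_split a b (z : 'cV[C]_(a + b)) : nsq z = nsq (usubmx z) + nsq (dsubmx z).
Proof. by rewrite /nsq big_split_ord /=; congr (_ + _); apply: eq_bigr => i _; rewrite mxE. Qed.

Lemma mulmx_cols p q (M : 'M[C]_(p, q)) (x : 'cV[C]_q) :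
  M *m x = \sum_j x j 0 *: col j M.
Proof.
apply/matrixP => i k; rewrite ord1 !mxE summxE; apply: eq_bigr => j _.
by rewrite !mxE mulrC.
Qed.

Lemma vnorm_sum I (r : seq I) (P : pred I) q (F : I -> 'cV[C]_q) :
  vnorm2 (\sum_(j <- r | P j) F j) <= \sum_(j <- r | P j) vnorm2 (F j).
Proof.
apply: (big_rec2 (fun a b => vnorm2 b <= a)).
  by rewrite /vnorm2 big1 ?sqrtr0 // => i _; rewrite mxE /n2 /= expr0n addr0.
by move=> j a b _ h; apply: le_trans (vnormD _ _) _; rewrite lerD2l.
Qed.

Lemma vnorm_mul_bound p q (M : 'M[C]_(p, q)) (x : 'cV[C]_q) :
  vnorm2 x = 1 -> vnorm2 (M *m x) <= \sum_j vnorm2 (col j M).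
Proof.
move=> x1; rewrite mulmx_cols; apply: le_trans (vnorm_sum _ _ _) _.
apply: ler_sum => j _; rewrite vnormZ -{2}[vnorm2 (col j M)]mul1r.
by rewrite ler_wpM2r ?vnorm_ge0 // -x1 entry_le.
Qed.

Definition Sset p q (M : 'M[C]_(p, q)) :=
  [set vnorm2 (M *m x) | x in [set x : 'cV[C]_q | vnorm2 x = 1]]%classic.

Lemma unit_vec q : vnorm2 (delta_mx 0 0 : 'cV[C]_q.+1) = 1.
Proof.
rewrite vnormE /nsq (bigD1 0) //= big1 ?addr0.
  by rewrite mxE /= /n2 /= expr0n addr0 expr1n sqrtr1.
by move=> i /negPf hi; rewrite mxE hi /n2 /= expr0n addr0.
Qed.

Lemma Sset_n0 p q (M : 'M[C]_(p, q.+1)) : (Sset M !=set0)%classic.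
Proof. by exists (vnorm2 (M *m delta_mx 0 0)); exists (delta_mx 0 0) => //; apply: unit_vec. Qed.

Lemma Sset_ub p q (M : 'M[C]_(p, q)) : has_ubound (Sset M).
Proof. by exists (\sum_j vnorm2 (col j M)) => _ [x /= x1 <-]; apply: vnorm_mul_bound. Qed.

Lemma Sset_lb p q (M : 'M[C]_(p, q)) : has_lbound (Sset M).
Proof. by exists 0 => _ [x /= x1 <-]; apply: vnorm_ge0. Qed.

Lemma spec_norm_ub p q (M : 'M[C]_(p, q)) x : vnorm2 x = 1 -> vnorm2 (M *m x) <= spec_norm M.
Proof. by move=> x1; apply: (ub_le_sup (Sset_ub M)); exists x. Qed.

Lemma spec_norm_le p q (M : 'M[C]_(p, q.+1)) c :
  (forall x, vnorm2 x = 1 -> vnorm2 (M *m x) <= c) -> spec_norm M <= c.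
Proof. by move=> h; apply: ge_sup (Sset_n0 M) _ => _ [x /= x1 <-]; apply: h. Qed.

Lemma spec_norm_ge0 p q (M : 'M[C]_(p, q.+1)) : 0 <= spec_norm M.
Proof. by apply: le_trans (vnorm_ge0 (M *m delta_mx 0 0)) (spec_norm_ub _ (unit_vec _)). Qed.

Lemma sigma_min_lb q (M : 'M[C]_q) x : vnorm2 x = 1 -> sigma_min M <= vnorm2 (M *m x).
Proof. by move=> x1; apply: (ge_inf (Sset_lb M)); exists x. Qed.

Lemma sigma_min_le q (M : 'M[C]_q.+1) : sigma_min M <= spec_norm M.
Proof. exact: le_trans (sigma_min_lb M (unit_vec _)) (spec_norm_ub _ (unit_vec _)). Qed.

Lemma normalize q (x : 'cV[C]_q) : x != 0 ->
  exists2 c : R, 0 < c & vnorm2 ((c^-1)%:C%C *: x) = 1 /\ c = vnorm2 x.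
Proof.
move=> x0; have c0 : 0 < vnorm2 x.
  by rewrite lt_neqAle vnorm_ge0 andbT eq_sym; apply/eqP => /vnorm_eq0; apply/eqP.
exists (vnorm2 x) => //; split => //.
rewrite vnormZ /cabs -/(n2 _) n2C sqrtr_sqr ger0_norm ?invr_ge0 ?ltW //.
by rewrite mulVf // gt_eqF.
Qed.

Lemma vnorm0 q : vnorm2 (0 : 'cV[C]_q) = 0.
Proof. by rewrite /vnorm2 big1 ?sqrtr0 // => i _; rewrite mxE /= expr0n addr0. Qed.

Lemma cabs_inv (c : R) : 0 < c -> cabs ((c^-1)%:C%C) = c^-1.
Proof. by move=> c0; rewrite /cabs -/(n2 _) n2C sqrtr_sqr ger0_norm // invr_ge0 ltW. Qed.

Lemma spec_normP p q (M : 'M[C]_(p, q)) x : vnorm2 (M *m x) <= spec_norm M * vnorm2 x.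
Proof.
have [->|x0] := eqVneq x 0; first by rewrite mulmx0 !vnorm0 mulr0.
have [c c0 [h1 h2]] := normalize x0.
have := spec_norm_ub M h1; rewrite -scalemxAr vnormZ cabs_inv // -h2.
by rewrite mulrC ler_pdivrMr.
Qed.

Lemma sigma_minP q (M : 'M[C]_q) x : sigma_min M * vnorm2 x <= vnorm2 (M *m x).
Proof.
have [->|x0] := eqVneq x 0; first by rewrite mulmx0 !vnorm0 mulr0.
have [c c0 [h1 h2]] := normalize x0.
have := sigma_min_lb M h1; rewrite -scalemxAr vnormZ cabs_inv // -h2.
by rewrite mulrC ler_pdivlMr.
Qed.

Lemma cabsM (a b : C) : cabs (a * b) = cabs a * cabs b.
Proof. by rewrite /cabs -!/(n2 _) n2M sqrtrM // n2_ge0. Qed.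

Lemma cabs1 : cabs (1 : C) = 1.
Proof. by rewrite /cabs /= expr1n expr0n addr0 sqrtr1. Qed.

Lemma cabs_ge0 (a : C) : 0 <= cabs a. Proof. exact: sqrtr_ge0. Qed.

Lemma cabs_div (a b : C) : b != 0 -> cabs (a / b) = cabs a / cabs b.
Proof.
move=> b0; rewrite cabsM; congr (_ * _).
have h : cabs b * cabs b^-1 = 1 by rewrite -cabsM mulfV // cabs1.
have nb : cabs b != 0 by apply: contra_eq_neq h => ->; rewrite mul0r eq_sym oner_neq0.
by apply: (mulfI nb); rewrite h mulfV.
Qed.

Lemma cabs_gt0 (a : C) : a != 0 -> 0 < cabs a.
Proof.
move=> a0; rewrite /cabs sqrtr_gt0 lt_neqAle n2_ge0 andbT eq_sym.
by apply: contra_neq a0 => /n2_eq0.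
Qed.

Lemma le_sqrt_of (u v : R) : u ^+ 2 <= v -> u <= Num.sqrt v.
Proof.
move=> h; have [u0|u0] := lerP u 0; first exact: le_trans u0 (sqrtr_ge0 _).
by rewrite -(ger0_norm (ltW u0)) -sqrtr_sqr ler_wsqrtr.
Qed.

Lemma diag_ge p (w z : 'cV[C]_p) (mu : 'I_p -> C) (c : R) : 0 <= c ->
  (forall i, w i 0 = mu i * z i 0) -> (forall i, c <= cabs (mu i)) ->
  c * vnorm2 z <= vnorm2 w.
Proof.
move=> c0 hw hmu; rewrite !vnormE -(ger0_norm c0) -sqrtr_sqr -sqrtrM ?sqr_ge0 //.
rewrite ler_wsqrtr // /nsq mulr_sumr; apply: ler_sum => i _.
rewrite hw n2M ler_wpM2r ?n2_ge0 //.
have := hmu i; rewrite cabsE => h.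
have := n2_ge0 (mu i) => h0; have := sqr_sqrtr h0 => hs.
have := sqrtr_ge0 (n2 (mu i)) => hs0; nra.
Qed.

Lemma diag_le p (w z : 'cV[C]_p) (mu : 'I_p -> C) (c : R) : 0 <= c ->
  (forall i, w i 0 = mu i * z i 0) -> (forall i, cabs (mu i) <= c) ->
  vnorm2 w <= c * vnorm2 z.
Proof.
move=> c0 hw hmu; rewrite !vnormE -(ger0_norm c0) -sqrtr_sqr -sqrtrM ?sqr_ge0 //.
rewrite ler_wsqrtr // /nsq mulr_sumr; apply: ler_sum => i _.
rewrite hw n2M ler_wpM2r ?n2_ge0 //.
have := hmu i; rewrite cabsE => h.
have := n2_ge0 (mu i) => h0; have := sqr_sqrtr h0 => hs.
have := sqrtr_ge0 (n2 (mu i)) => hs0; nra.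
Qed.

Lemma cs2 (t e1 e2 : R) : t * e1 + e2 <= Num.sqrt (1 + t ^+ 2) * Num.sqrt (e1 ^+ 2 + e2 ^+ 2).
Proof.
rewrite -sqrtrM; last by rewrite addr_ge0 // sqr_ge0.
apply: le_sqrt_of; have := sqr_ge0 (e1 - t * e2); nra.
Qed.

Lemma from_H (eps lm l' sg ny nz nv t s : R) :
 0 < lm -> 0 <= l' -> 0 <= eps -> 0 <= ny -> 0 <= nz -> 0 <= nv -> 0 <= t -> 0 < s ->
 sg <= ny -> nz * s <= t * nv ->
 eps / lm < (sg / ny - l' / lm) * (ny * nz / nv) ->
 0 < t * (lm - l') * sg - s * eps.
Proof.
move=> lm0 l0 e0 ny0 nz0 nv0 t0 s0 sgny G3 H.
have el : 0 <= eps / lm by rewrite divr_ge0 // ltW.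
have [ny_0|nyp] := eqVneq ny 0.
  by move: H; rewrite ny_0 !mul0r mulr0 => H; move: (lt_le_trans H el); rewrite ltxx.
have [nv_0|nvp] := eqVneq nv 0.
  by move: H; rewrite nv_0 invr0 !mulr0 => H; move: (lt_le_trans H el); rewrite ltxx.
have ny1 : 0 < ny by rewrite lt_neqAle eq_sym nyp ny0.
have nv1 : 0 < nv by rewrite lt_neqAle eq_sym nvp nv0.
have lmn : lm != 0 by rewrite gt_eqF.
set c := lm * sg - l' * ny.
have e : (sg / ny - l' / lm) * (ny * nz / nv) = c * nz / (lm * nv).
  by rewrite /c; field; rewrite nyp nvp lmn.
rewrite e in H.
have lnv : 0 < lm * nv by rewrite mulr_gt0.
have H2 : eps * nv < c * nz.
  have : eps / lm * (lm * nv) < c * nz / (lm * nv) * (lm * nv) by rewrite ltr_pM2r.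
  have -> : eps / lm * (lm * nv) = eps * nv by field.
  have -> : c * nz / (lm * nv) * (lm * nv) = c * nz.
    by field; rewrite ?mulf_neq0 ?lmn ?nvp.
  by [].
have env : 0 <= eps * nv by rewrite mulr_ge0.
have c0 : 0 < c.
  rewrite ltNge; apply/negP => hc.
  have := mulr_le0_ge0 hc nz0; lra.
have H3 : s * eps * nv < s * c * nz by rewrite -!mulrA ltr_pM2l.
have H4 : s * c * nz <= c * (t * nv).
  have -> : s * c * nz = c * (nz * s) by ring.
  by rewrite ler_wpM2l // ltW.
have H5 : s * eps < c * t.
  rewrite -(ltr_pM2r nv1); apply: (lt_le_trans H3); apply: (le_trans H4).
  by rewrite mulrA.
have H6 : c <= (lm - l') * sg.
  have := ler_wpM2l l0 sgny; rewrite /c; lra.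
have H7 : c * t <= t * (lm - l') * sg by rewrite mulrC -mulrA ler_wpM2l.
lra.
Qed.

Lemma sq_le (a b : R) : 0 <= a -> a <= b -> a ^+ 2 <= b ^+ 2.
Proof. move=> a0 ab; nra. Qed.

Lemma core (t lm l' a b e1 e2 sg nx s eps wx ux : R) :
  0 <= t -> 0 <= l' -> l' <= lm -> b <= t * a -> sg * nx <= a ->
  t * e1 + e2 <= s * eps * nx -> lm * a - e1 <= wx -> ux <= l' * b + e2 ->
  ux <= t * wx - (t * (lm - l') * sg - s * eps) * nx.
Proof.
move=> t0 l0 ll hb ha he hw hu.
have h1 : t * (lm * a - e1) <= t * wx by rewrite ler_wpM2l.
have h2 : l' * b <= l' * (t * a) by rewrite ler_wpM2l.
have h3 : t * (lm - l') * (sg * nx) <= t * (lm - l') * a.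
  by rewrite ler_wpM2l // mulr_ge0 // subr_ge0.
nra.
Qed.
End Aux.

Unset Implicit Arguments.

Theorem theorem4 (R : realType) (m k : nat)
  (A Psi : 'M[R[i]]_(m.+1 + k.+1)) (lambda : 'I_(m.+1 + k.+1) -> R[i])
  (V : 'M[R[i]]_(m.+1 + k.+1, m.+1)) (Phi : 'M[R[i]]_m.+1)
  (E : 'M[R[i]]_(m.+1 + k.+1, m.+1)) :
  ctrmx Psi *m Psi = 1%:M ->
  (forall j, A *m col j Psi = lambda j *: col j Psi) ->
  (forall i j : 'I_(m.+1 + k.+1), (i <= j)%N -> cabs (lambda j) <= cabs (lambda i)) ->
  lambda (lshift k.+1 (@ord_max m)) != 0 ->
  ctrmx (lsubmx Psi) *m V \in unitmx ->
  Phi \in unitmx ->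
  let lam_m := lambda (lshift k.+1 (@ord_max m)) in
  let lam_m1 := lambda (rshift m.+1 (@ord0 k)) in
  let VPhi := V *m Phi in
  let Vp := A *m V *m Phi + E in
  spec_norm E / cabs lam_m <
    ((kappa2 (ctrmx (lsubmx Psi) *m VPhi))^-1 - cabs (lam_m1 / lam_m)) *
    (spec_norm (ctrmx (lsubmx Psi) *m VPhi) * spec_norm (ctrmx (rsubmx Psi) *m VPhi)
     / spec_norm VPhi) ->
  max_angle Psi Vp < max_angle Psi V.
Proof.
move=> HP HA Hord Hlm HV HPhi lam_m lam_m1 VPhi Vp H.
set P := ctrmx Psi.
have HP' : Psi *m P = 1%:M by apply: mulmx1C.
have HPP : ctrmx P *m P = 1%:M by rewrite /P ctrmxK.
have cl : ctrmx (lsubmx Psi) = usubmx P by apply/matrixP => i j; rewrite !mxE.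
have cr : ctrmx (rsubmx Psi) = dsubmx P by apply/matrixP => i j; rewrite !mxE.
set D := diag_mx (\row_j lambda j).
have AP : A *m Psi = Psi *m D.
  apply/matrixP => i j; have := HA j => /matrixP/(_ i 0).
  rewrite mul_mx_diag !mxE mulrC => <-; apply: eq_bigr => l _; by rewrite !mxE.
have PA : P *m A = D *m P.
  by rewrite -[P *m A]mulmx1 -HP' !mulmxA -(mulmxA P) AP mulmxA HP mul1mx.
rewrite cl cr in H HV; rewrite /max_angle /= cl cr HV.
set Y := usubmx P *m VPhi in H *.
set Z := dsubmx P *m VPhi in H *.
set G := dsubmx P *m V *m invmx (usubmx P *m V).
set t := spec_norm G.
set W := usubmx P *m Vp.
set U := dsubmx P *m Vp.
set lm := cabs lam_m. set l' := cabs lam_m1.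
set sg := sigma_min Y. set ny := spec_norm Y. set nz := spec_norm Z.
set nv := spec_norm VPhi. set eps := spec_norm E.
set s := Num.sqrt (1 + t ^+ 2).
have lm0 : 0 < lm by apply: cabs_gt0.
have l'0 : 0 <= l' by apply: cabs_ge0.
have ll : l' <= lm by apply: Hord => /=; rewrite addn0 ltnW.
have t0 : 0 <= t by apply: spec_norm_ge0.
have eps0 : 0 <= eps by apply: spec_norm_ge0.
have s0 : 0 <= s by apply: sqrtr_ge0.
have hZ x : Z *m x = G *m (Y *m x).
  by rewrite /G /Z /Y /VPhi -!mulmxA (mulmxA (usubmx P) V) mulKmx.
have F1 x : vnorm2 (Z *m x) <= t * vnorm2 (Y *m x) by rewrite hZ spec_normP.
have nsqYZ x : nsq (VPhi *m x) = nsq (Y *m x) + nsq (Z *m x).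
  rewrite -(nsq_unitary _ HPP) nsq_split /Y /Z.
  by rewrite -!mulmxA !mul_usub_mx !mul_dsub_mx.
have s_gt0 : 0 < s by rewrite sqrtr_gt0 ltr_pwDl // sqr_ge0.
have G3 : nz * s <= t * nv.
  rewrite -ler_pdivlMr //; apply: spec_norm_le => x x1.
  rewrite ler_pdivlMr //.
  have hb := F1 x.
  have hv : vnorm2 (VPhi *m x) <= nv := spec_norm_ub VPhi x1.
  have e : vnorm2 (VPhi *m x) ^+ 2 = vnorm2 (Y *m x) ^+ 2 + vnorm2 (Z *m x) ^+ 2.
    by rewrite !vnorm_sq nsqYZ.
  have ha0 := vnorm_ge0 (Y *m x); have hb0 := vnorm_ge0 (Z *m x).
  have hv0 := vnorm_ge0 (VPhi *m x).
  have tnv : 0 <= t * nv := mulr_ge0 t0 (le_trans hv0 hv).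
  rewrite -(ger0_norm tnv) -sqrtr_sqr; apply: le_sqrt_of.
  have ss : s ^+ 2 = 1 + t ^+ 2 by rewrite /s sqr_sqrtr // addr_ge0 ?sqr_ge0.
  rewrite exprMn ss.
  set a := vnorm2 (Y *m x) in hb e ha0 *; set b := vnorm2 (Z *m x) in hb e hb0 *.
  set v := vnorm2 (VPhi *m x) in hv e hv0 *.
  have h1 : b ^+ 2 <= t ^+ 2 * a ^+ 2 by rewrite -exprMn; apply: sq_le hb0 hb.
  have h2 : v ^+ 2 <= nv ^+ 2 := sq_le hv0 hv.
  have h3 : t ^+ 2 * v ^+ 2 <= t ^+ 2 * nv ^+ 2 by rewrite ler_wpM2l // sqr_ge0.
  rewrite [(t * nv) ^+ 2]exprMn; apply: le_trans h3.
  by rewrite e mulrDr mulrDr mulr1 [b ^+ 2 * t ^+ 2]mulrC lerD2r.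
have HH : 0 < t * (lm - l') * sg - s * eps.
  move: H; rewrite /kappa2 invf_div (cabs_div _ Hlm) => H.
  exact: (from_H lm0 l'0 eps0 (spec_norm_ge0 Y) (spec_norm_ge0 Z) (spec_norm_ge0 VPhi) t0 s_gt0 (sigma_min_le Y) G3 H).
set del := t * (lm - l') * sg - s * eps.
have usubD p q (a b : 'cV[R[i]]_(p + q)) : usubmx (a + b) = usubmx a + usubmx b.
  by apply/matrixP => i j; rewrite !mxE.
have dsubD p q (a b : 'cV[R[i]]_(p + q)) : dsubmx (a + b) = dsubmx a + dsubmx b.
  by apply/matrixP => i j; rewrite !mxE.
have key x : vnorm2 (U *m x) <= t * vnorm2 (W *m x) - del * vnorm2 x.
  set zV := P *m (VPhi *m x). set zE := P *m (E *m x).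
  have hY : usubmx zV = Y *m x by rewrite /zV /Y !mul_usub_mx mulmxA.
  have hZ' : dsubmx zV = Z *m x by rewrite /zV /Z !mul_dsub_mx mulmxA.
  have hPV : P *m (Vp *m x) = D *m zV + zE.
    by rewrite /Vp /zV /zE /VPhi mulmxDl mulmxDr !mulmxA PA.
  have hW : W *m x = usubmx (D *m zV) + usubmx zE.
    by rewrite /W !mul_usub_mx -mulmxA hPV usubD.
  have hU : U *m x = dsubmx (D *m zV) + dsubmx zE.
    by rewrite /U !mul_dsub_mx -mulmxA hPV dsubD.
  have he : vnorm2 (usubmx zE) ^+ 2 + vnorm2 (dsubmx zE) ^+ 2 <= (eps * vnorm2 x) ^+ 2.
    rewrite !vnorm_sq -nsq_split /zE (nsq_unitary _ HPP) -vnorm_sq.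
    exact: sq_le (vnorm_ge0 _) (spec_normP E x).
  have hcs : t * vnorm2 (usubmx zE) + vnorm2 (dsubmx zE) <= s * eps * vnorm2 x.
    apply: le_trans (cs2 _ _ _) _; rewrite -/s -mulrA; apply: (ler_wpM2l (ltW s_gt0)).
    exact: sqrt_le_of (mulr_ge0 eps0 (vnorm_ge0 x)) he.
  have d1 : lm * vnorm2 (usubmx zV) <= vnorm2 (usubmx (D *m zV)).
    apply: (@diag_ge _ _ _ _ (fun i => lambda (lshift k.+1 i))) (ltW lm0) _ _.
      by move=> i; rewrite /D mul_diag_mx !mxE.
    by move=> i; apply: Hord => /=; rewrite -ltnS ltn_ord.
  have d2 : vnorm2 (dsubmx (D *m zV)) <= l' * vnorm2 (dsubmx zV).
    apply: (@diag_le _ _ _ _ (fun i => lambda (rshift m.+1 i))) l'0 _ _.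
      by move=> i; rewrite /D mul_diag_mx !mxE.
    by move=> i; apply: Hord => /=; rewrite leq_add2l.
  have hwx : lm * vnorm2 (Y *m x) - vnorm2 (usubmx zE) <= vnorm2 (W *m x).
    rewrite -hY lerBlDr; apply: (le_trans d1).
    have -> : usubmx (D *m zV) = W *m x + - usubmx zE by rewrite hW addrK.
    by rewrite -(vnormN (usubmx zE)); apply: vnormD.
  have hux : vnorm2 (U *m x) <= l' * vnorm2 (Z *m x) + vnorm2 (dsubmx zE).
    rewrite hU -hZ'; apply: (le_trans (vnormD _ _)); by rewrite lerD2r.
  exact: (core t0 l'0 ll (F1 x) (sigma_minP Y x) hcs hwx hux).
have Wunit : W \in unitmx.
  rewrite -unitmx_tr unitmxE unitfE; apply/negP => /det0P [v v0 vW].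
  have Wx0 : W *m v^T = 0 by rewrite -[W]trmxK -trmx_mul vW trmx0.
  have := key v^T; rewrite Wx0 vnorm0 mulr0 sub0r => h.
  have h0 := vnorm_ge0 (U *m v^T); have h1 := vnorm_ge0 v^T.
  have h2 : del * vnorm2 v^T <= 0 by rewrite -oppr_ge0; exact: le_trans h0 h.
  have hx : vnorm2 v^T = 0.
    by apply/eqP; rewrite eq_le h1 andbT -(pmulr_rle0 _ HH).
  have := vnorm_eq0 hx => /(congr1 trmx); rewrite trmxK trmx0 => v00.
  by rewrite v00 eqxx in v0.
rewrite Wunit; apply: lt_atan.
set nW := spec_norm W.
have y0 : vnorm2 (delta_mx 0 0 : 'cV[R[i]]_m.+1) = 1 by apply: unit_vec.
have Winv y : W *m (invmx W *m y) = y by rewrite mulmxA (mulmxV Wunit) mul1mx.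
have nW0 : 0 < nW.
  have := spec_normP W (invmx W *m delta_mx 0 0); rewrite Winv y0 => h.
  rewrite lt_neqAle (spec_norm_ge0 W) andbT; apply/eqP => e; move: h.
  by rewrite -/nW -e mul0r ler10.
have bound : spec_norm (U *m invmx W) <= t - del / nW.
  apply: spec_norm_le => y y1.
  set x := invmx W *m y.
  have := key x; rewrite /x Winv y1 mulr1 => h.
  have h2 : 1 <= nW * vnorm2 x by have := spec_normP W x; rewrite /x Winv y1.
  rewrite -mulmxA; apply: (le_trans h); rewrite lerD2l lerN2.
  have := ler_wpM2l (ltW HH) h2; rewrite mulr1 => h3.
  rewrite ler_pdivrMr; last exact: nW0.
  by apply: (le_trans h3); rewrite [nW * _]mulrC mulrA.
apply: le_lt_trans bound _; rewrite ltrBlDr ltrDl divr_gt0 //.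
Qed.
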